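(* Let $T$ be a triangle which is not of type $(108^\circ,36^\circ,36^\circ)$, $(72^\circ,72^\circ,36^\circ)$ or $(120^\circ,30^\circ,30^\circ)$. Then the tight 5-cycle $C_5$ with vertex set $[5]$ and edges $123,234,345,145,125$ is forbidden for $T$.
   Context: A 3-graph is a 3-uniform hypergraph; $G$ is $F$-free if it has no (not necessarily induced) subhypergraph isomorphic to $F$. A triangle is of type $(\alpha,\beta,\gamma)$ if $\alpha\ge\beta\ge\gamma$ are its interior angles in degrees. For a triangle $T$ with side lengths $a,b,c$ and $\varepsilon>0$, with $\varepsilon'=\varepsilon\min\{a,b,c\}$, a triangle $A'B'C'$ is $\varepsilon$-congruent to $T$ if there are $A,B,C\in\mathbb{R}^2$ with $ABC$ congruent to $T$ and $A',B',C'$ within distance $\varepsilon'$ of $A,B,C$ respectively. For finite $P\subseteq\mathbb{R}^2$, $\mathcal{H}(T,P,\varepsilon)$ is the 3-graph on $P$ whose edges are triples forming triangles $\varepsilon$-congruent to $T$. A 3-graph $H$ is forbidden for $T$ if there exists $\varepsilon>0$ such that for every $P\subseteq\mathbb{R}^2$ with $|P|=|V(H)|$, $\mathcal{H}(T,P,\varepsilon)$ is $H$-free. *)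

(* Defs.v *)
From Stdlib Require Import Reals Lra List.
Open Scope R_scope.

Definition point : Type := (R * R)%type.

Definition dist (p q : point) : R :=
  sqrt ((fst p - fst q) ^ 2 + (snd p - snd q) ^ 2).

Definition noncollinear (A B C : point) : Prop :=
  (fst B - fst A) * (snd C - snd A) - (snd B - snd A) * (fst C - fst A) <> 0.

Definition angle_deg (A B C : point) : R :=
  acos (((fst B - fst A) * (fst C - fst A) + (snd B - snd A) * (snd C - snd A))
        / (dist A B * dist A C)) * 180 / PI.

Definition is_type (A B C : point) (al be ga : R) : Prop :=
  let a := angle_deg A B C in
  let b := angle_deg B C A in
  let c := angle_deg C A B in
  (a = al /\ b = be /\ c = ga) \/ (a = al /\ b = ga /\ c = be) \/
  (a = be /\ b = al /\ c = ga) \/ (a = be /\ b = ga /\ c = al) \/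
  (a = ga /\ b = al /\ c = be) \/ (a = ga /\ b = be /\ c = al).

Definition eps_congruent (TA TB TC : point) (eps : R) (A' B' C' : point) : Prop :=
  let eps' := eps * Rmin (dist TB TC) (Rmin (dist TC TA) (dist TA TB)) in
  exists A B C : point,
    dist A B = dist TA TB /\ dist B C = dist TB TC /\ dist C A = dist TC TA /\
    dist A' A <= eps' /\ dist B' B <= eps' /\ dist C' C <= eps'.

Definition Hedge (TA TB TC : point) (eps : R) (x y z : point) : Prop :=
  x <> y /\ y <> z /\ x <> z /\
  (eps_congruent TA TB TC eps x y z \/ eps_congruent TA TB TC eps x z y \/
   eps_congruent TA TB TC eps y x z \/ eps_congruent TA TB TC eps y z x \/
   eps_congruent TA TB TC eps z x y \/ eps_congruent TA TB TC eps z y x).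

(* A 3-graph H on vertex set [n] = {1,...,n}, given by its list of edges. *)
Record hgraph3 := { hg_n : nat; hg_edges : list (nat * nat * nat) }.

Definition contains_copy (TA TB TC : point) (eps : R) (P : list point) (H : hgraph3) : Prop :=
  exists f : nat -> point,
    (forall i, (1 <= i <= hg_n H)%nat -> In (f i) P) /\
    (forall i j, (1 <= i <= hg_n H)%nat -> (1 <= j <= hg_n H)%nat -> f i = f j -> i = j) /\
    (forall i j k, In (i, j, k) (hg_edges H) -> Hedge TA TB TC eps (f i) (f j) (f k)).

Definition forbidden (TA TB TC : point) (H : hgraph3) : Prop :=
  exists eps : R, eps > 0 /\
    forall P : list point, NoDup P -> length P = hg_n H ->
      ~ contains_copy TA TB TC eps P H.

Definition C5 : hgraph3 :=
  {| hg_n := 5; hg_edges := (1,2,3)%nat :: (2,3,4)%nat :: (3,4,5)%nat :: (1,4,5)%nat :: (1,2,5)%nat :: nil |}.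

(* Main.v *)
From Stdlib Require Import Reals Lra List Psatz.
From Stdlib Require Rgeom.
Require Import Defs.
Open Scope R_scope.

Lemma dist_sym (p q : point) : dist p q = dist q p.
Proof. unfold dist; f_equal; ring. Qed.

Lemma dist_nonneg (p q : point) : 0 <= dist p q.
Proof. unfold dist; apply sqrt_pos. Qed.

Lemma dist_tri (p q r : point) : dist p r <= dist p q + dist q r.
Proof.
  destruct p as [p1 p2], q as [q1 q2], r as [r1 r2].
  pose proof (Rgeom.triangle p1 p2 r1 r2 q1 q2) as H.
  unfold Rgeom.dist_euc, Rsqr in H. unfold dist; cbn [fst snd].
  replace ((p1 - r1) ^ 2 + (p2 - r2) ^ 2) with ((p1 - r1) * (p1 - r1) + (p2 - r2) * (p2 - r2)) by ring.
  replace ((p1 - q1) ^ 2 + (p2 - q2) ^ 2) with ((p1 - q1) * (p1 - q1) + (p2 - q2) * (p2 - q2)) by ring.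
  replace ((q1 - r1) ^ 2 + (q2 - r2) ^ 2) with ((q1 - r1) * (q1 - r1) + (q2 - r2) * (q2 - r2)) by ring.
  exact H.
Qed.

Definition sq (p q : point) : R := (fst p - fst q)^2 + (snd p - snd q)^2.

Lemma dist_sq (p q : point) : dist p q ^ 2 = sq p q.
Proof. unfold dist, sq. apply pow2_sqrt. apply Rplus_le_le_0_compat; apply pow2_ge_0. Qed.

Lemma approx_side (x y A B : point) e :
  dist x A <= e -> dist y B <= e -> Rabs (dist x y - dist A B) <= 2 * e.
Proof.
  intros h1 h2.
  pose proof (dist_tri x A y). pose proof (dist_tri A B y).
  pose proof (dist_tri A x B). pose proof (dist_tri x y B).
  pose proof (dist_sym A x). pose proof (dist_sym B y).
  apply Rabs_le; split; lra.
Qed.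

Definition perm6 (u v w a b c : R) : Prop :=
  (u=a/\v=b/\w=c) \/ (u=a/\v=c/\w=b) \/ (u=b/\v=a/\w=c) \/
  (u=b/\v=c/\w=a) \/ (u=c/\v=a/\w=b) \/ (u=c/\v=b/\w=a).

Lemma eps_cong_approx TA TB TC eps x y z :
  eps_congruent TA TB TC eps x y z ->
  let e := 2 * (eps * Rmin (dist TB TC) (Rmin (dist TC TA) (dist TA TB))) in
  Rabs (dist x y - dist TA TB) <= e /\ Rabs (dist y z - dist TB TC) <= e /\
  Rabs (dist z x - dist TC TA) <= e.
Proof.
  intros [A [B [C [h1 [h2 [h3 [h4 [h5 h6]]]]]]]] e.
  rewrite <- h1, <- h2, <- h3.
  split; [|split]; apply approx_side; assumption.
Qed.

Lemma Hedge_approx TA TB TC eps x y z :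
  Hedge TA TB TC eps x y z ->
  let e := 2 * (eps * Rmin (dist TB TC) (Rmin (dist TC TA) (dist TA TB))) in
  exists L1 L2 L3, perm6 L1 L2 L3 (dist TB TC) (dist TC TA) (dist TA TB) /\
    Rabs (dist x y - L1) <= e /\ Rabs (dist y z - L2) <= e /\ Rabs (dist x z - L3) <= e.
Proof.
  intros [_ [_ [_ H]]] e.
  unfold perm6.
  destruct H as [H|[H|[H|[H|[H|H]]]]]; apply eps_cong_approx in H; fold e in H;
  destruct H as [h1 [h2 h3]];
  repeat rewrite (dist_sym z x) in *; repeat rewrite (dist_sym z y) in *;
  repeat rewrite (dist_sym y x) in *.
  - exists (dist TA TB), (dist TB TC), (dist TC TA); tauto.
  - exists (dist TC TA), (dist TB TC), (dist TA TB); tauto.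
  - exists (dist TA TB), (dist TC TA), (dist TB TC); tauto.
  - exists (dist TC TA), (dist TA TB), (dist TB TC); tauto.
  - exists (dist TB TC), (dist TC TA), (dist TA TB); tauto.
  - exists (dist TB TC), (dist TA TB), (dist TC TA); tauto.
Qed.

Fixpoint kmin (l : list R) : R :=
  match l with
  | nil => 1
  | t :: l' => if Rlt_dec 0 t then Rmin t (kmin l') else kmin l'
  end.

Lemma kmin_pos l : 0 < kmin l.
Proof.
  induction l as [|t l IH]; simpl. lra.
  destruct (Rlt_dec 0 t). apply Rmin_glb_lt; lra. exact IH.
Qed.

Lemma kmin_le l t : In t l -> 0 < t -> kmin l <= t.
Proof.
  induction l as [|u l IH]; simpl. tauto.
  intros [ -> | H ] Ht.
  - destruct (Rlt_dec 0 t); [apply Rmin_l|lra].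
  - destruct (Rlt_dec 0 u). eapply Rle_trans; [apply Rmin_r|]. auto. auto.
Qed.

Definition round (sa sb sc e d : R) : R :=
  if Rle_dec (Rabs (d - sa)) e then sa else if Rle_dec (Rabs (d - sb)) e then sb else sc.

Definition gapok (sa sb sc e : R) : Prop :=
  (sa <> sb -> 2*e < Rabs (sa - sb)) /\ (sb <> sc -> 2*e < Rabs (sb - sc)) /\
  (sa <> sc -> 2*e < Rabs (sa - sc)).

Lemma gap_aux (s t d e : R) : (s <> t -> 2*e < Rabs (s - t)) ->
  Rabs (d - s) <= e -> Rabs (d - t) <= e -> s = t.
Proof.
  intros H h1 h2. destruct (Req_dec s t) as [|n]; auto.
  specialize (H n). exfalso.
  revert H h1 h2. unfold Rabs; repeat destruct Rcase_abs; intros; lra.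
Qed.

Lemma round_ok sa sb sc e d L : gapok sa sb sc e -> Rabs (d - L) <= e ->
  (L = sa \/ L = sb \/ L = sc) -> round sa sb sc e d = L.
Proof.
  intros [g1 [g2 g3]] hL HL. unfold round.
  destruct (Rle_dec (Rabs (d - sa)) e) as [h1|h1].
  - destruct HL as [ -> | [ -> | -> ] ]; auto.
    + eapply gap_aux; eauto.
    + eapply gap_aux; eauto.
  - destruct (Rle_dec (Rabs (d - sb)) e) as [h2|h2].
    + destruct HL as [ -> | [ -> | -> ] ]; auto.
      * tauto.
      * eapply gap_aux; eauto.
    + destruct HL as [ -> | [ -> | -> ] ]; tauto.
Qed.

Lemma perm6_in u v w a b c : perm6 u v w a b c ->
  (u = a \/ u = b \/ u = c) /\ (v = a \/ v = b \/ v = c) /\ (w = a \/ w = b \/ w = c).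
Proof. unfold perm6; intuition (subst; tauto). Qed.

Lemma perm6_round sa sb sc e u v w L1 L2 L3 : gapok sa sb sc e ->
  perm6 L1 L2 L3 sa sb sc ->
  Rabs (u - L1) <= e -> Rabs (v - L2) <= e -> Rabs (w - L3) <= e ->
  perm6 (round sa sb sc e u) (round sa sb sc e v) (round sa sb sc e w) sa sb sc /\
  Rabs (u - round sa sb sc e u) <= e /\ Rabs (v - round sa sb sc e v) <= e /\
  Rabs (w - round sa sb sc e w) <= e.
Proof.
  intros g hp h1 h2 h3.
  destruct (perm6_in _ _ _ _ _ _ hp) as [i1 [i2 i3]].
  rewrite (round_ok _ _ _ _ _ _ g h1 i1), (round_ok _ _ _ _ _ _ g h2 i2),
    (round_ok _ _ _ _ _ _ g h3 i3).
  auto.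
Qed.

Definition cm4 (d12 d13 d14 d23 d24 d34 : R) : R :=
  (-2)*d23*d24*d34 + (2)*d14*d23*d34 + (2)*d14*d23*d24 + (-2)*d14*d23*d23 + (-2)*d14*d14*d23 + (2)*d13*d24*d34 + (-2)*d13*d24*d24 + (2)*d13*d23*d24 + (-2)*d13*d14*d34 + (2)*d13*d14*d24 + (2)*d13*d14*d23 + (-2)*d13*d13*d24 + (-2)*d12*d34*d34 + (2)*d12*d24*d34 + (2)*d12*d23*d34 + (2)*d12*d14*d34 + (-2)*d12*d14*d24 + (2)*d12*d14*d23 + (2)*d12*d13*d34 + (2)*d12*d13*d24 + (-2)*d12*d13*d23 + (-2)*d12*d12*d34.

Lemma cm4_planar (p1 p2 p3 p4 : point) :
  cm4 (sq p1 p2) (sq p1 p3) (sq p1 p4) (sq p2 p3) (sq p2 p4) (sq p3 p4) = 0.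
Proof. destruct p1, p2, p3, p4; unfold cm4, sq; cbn [fst snd]; ring. Qed.

Lemma Rabs_le_inv' x b : Rabs x <= b -> - b <= x <= b.
Proof. unfold Rabs; destruct Rcase_abs; intros; lra. Qed.

Lemma mon3 a b c a' b' c' M h : 0 <= M -> 0 <= h ->
  Rabs a <= M -> Rabs b <= M -> Rabs c <= M -> Rabs a' <= M -> Rabs b' <= M -> Rabs c' <= M ->
  Rabs (a - a') <= h -> Rabs (b - b') <= h -> Rabs (c - c') <= h ->
  Rabs (a*b*c - a'*b'*c') <= 3*M*M*h.
Proof.
  intros hM hh ha hb hc ha' hb' hc' d1 d2 d3.
  replace (a*b*c - a'*b'*c') with ((a-a')*b*c + a'*(b-b')*c + a'*b'*(c-c')) by ring.
  eapply Rle_trans; [apply Rabs_triang|].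
  eapply Rle_trans; [apply Rplus_le_compat_r; apply Rabs_triang|].
  rewrite !Rabs_mult.
  pose proof (Rabs_pos (a-a')). pose proof (Rabs_pos (b-b')). pose proof (Rabs_pos (c-c')).
  pose proof (Rabs_pos b). pose proof (Rabs_pos c). pose proof (Rabs_pos a'). pose proof (Rabs_pos b').
  assert (Rabs (a-a') * Rabs b * Rabs c <= h*M*M).
  { apply Rmult_le_compat; try apply Rmult_le_compat; try nra. }
  assert (Rabs a' * Rabs (b-b') * Rabs c <= M*h*M).
  { apply Rmult_le_compat; try apply Rmult_le_compat; try nra. }
  assert (Rabs a' * Rabs b' * Rabs (c-c') <= M*M*h).
  { apply Rmult_le_compat; try apply Rmult_le_compat; try nra. }
  nra.
Qed.

Lemma lin22 t0 t1 t2 t3 t4 t5 t6 t7 t8 t9 t10 t11 t12 t13 t14 t15 t16 t17 t18 t19 t20 t21 B :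
  Rabs t0 <= B -> Rabs t1 <= B -> Rabs t2 <= B -> Rabs t3 <= B -> Rabs t4 <= B -> Rabs t5 <= B -> Rabs t6 <= B -> Rabs t7 <= B -> Rabs t8 <= B -> Rabs t9 <= B -> Rabs t10 <= B -> Rabs t11 <= B -> Rabs t12 <= B -> Rabs t13 <= B -> Rabs t14 <= B -> Rabs t15 <= B -> Rabs t16 <= B -> Rabs t17 <= B -> Rabs t18 <= B -> Rabs t19 <= B -> Rabs t20 <= B -> Rabs t21 <= B ->
  Rabs ((-2)*t0 + (2)*t1 + (2)*t2 + (-2)*t3 + (-2)*t4 + (2)*t5 + (-2)*t6 + (2)*t7 + (-2)*t8 + (2)*t9 + (2)*t10 + (-2)*t11 + (-2)*t12 + (2)*t13 + (2)*t14 + (2)*t15 + (-2)*t16 + (2)*t17 + (2)*t18 + (2)*t19 + (-2)*t20 + (-2)*t21) <= 44*B.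
Proof.
  intros h0 h1 h2 h3 h4 h5 h6 h7 h8 h9 h10 h11 h12 h13 h14 h15 h16 h17 h18 h19 h20 h21.
  apply Rabs_le_inv' in h0. apply Rabs_le_inv' in h1. apply Rabs_le_inv' in h2. apply Rabs_le_inv' in h3. apply Rabs_le_inv' in h4. apply Rabs_le_inv' in h5. apply Rabs_le_inv' in h6. apply Rabs_le_inv' in h7. apply Rabs_le_inv' in h8. apply Rabs_le_inv' in h9. apply Rabs_le_inv' in h10. apply Rabs_le_inv' in h11. apply Rabs_le_inv' in h12. apply Rabs_le_inv' in h13. apply Rabs_le_inv' in h14. apply Rabs_le_inv' in h15. apply Rabs_le_inv' in h16. apply Rabs_le_inv' in h17. apply Rabs_le_inv' in h18. apply Rabs_le_inv' in h19. apply Rabs_le_inv' in h20. apply Rabs_le_inv' in h21.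
  apply Rabs_le; lra.
Qed.

Lemma cm4_lip u1 u2 u3 u4 u5 u6 w1 w2 w3 w4 w5 w6 M h : 0 <= M -> 0 <= h ->
  Rabs u1 <= M -> Rabs u2 <= M -> Rabs u3 <= M -> Rabs u4 <= M -> Rabs u5 <= M -> Rabs u6 <= M -> Rabs w1 <= M -> Rabs w2 <= M -> Rabs w3 <= M -> Rabs w4 <= M -> Rabs w5 <= M -> Rabs w6 <= M -> Rabs (u1 - w1) <= h -> Rabs (u2 - w2) <= h -> Rabs (u3 - w3) <= h -> Rabs (u4 - w4) <= h -> Rabs (u5 - w5) <= h -> Rabs (u6 - w6) <= h ->
  Rabs (cm4 u1 u2 u3 u4 u5 u6 - cm4 w1 w2 w3 w4 w5 w6) <= 132*M*M*h.
Proof.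
  intros hM hh a1 a2 a3 a4 a5 a6 b1 b2 b3 b4 b5 b6 c1 c2 c3 c4 c5 c6.
  replace (132*M*M*h) with (44*(3*M*M*h)) by ring.
  unfold cm4.
  match goal with |- Rabs ?X <= _ => replace X with ((-2)*(u4*u5*u6 - w4*w5*w6) + (2)*(u3*u4*u6 - w3*w4*w6) + (2)*(u3*u4*u5 - w3*w4*w5) + (-2)*(u3*u4*u4 - w3*w4*w4) + (-2)*(u3*u3*u4 - w3*w3*w4) + (2)*(u2*u5*u6 - w2*w5*w6) + (-2)*(u2*u5*u5 - w2*w5*w5) + (2)*(u2*u4*u5 - w2*w4*w5) + (-2)*(u2*u3*u6 - w2*w3*w6) + (2)*(u2*u3*u5 - w2*w3*w5) + (2)*(u2*u3*u4 - w2*w3*w4) + (-2)*(u2*u2*u5 - w2*w2*w5) + (-2)*(u1*u6*u6 - w1*w6*w6) + (2)*(u1*u5*u6 - w1*w5*w6) + (2)*(u1*u4*u6 - w1*w4*w6) + (2)*(u1*u3*u6 - w1*w3*w6) + (-2)*(u1*u3*u5 - w1*w3*w5) + (2)*(u1*u3*u4 - w1*w3*w4) + (2)*(u1*u2*u6 - w1*w2*w6) + (2)*(u1*u2*u5 - w1*w2*w5) + (-2)*(u1*u2*u4 - w1*w2*w4) + (-2)*(u1*u1*u6 - w1*w1*w6)) by ring end.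
  apply lin22; apply mon3; auto.
Qed.

Definition Gsum (d12 d13 d14 d15 d23 d24 d25 d34 d35 d45 : R) : R :=
  (cm4 d12 d13 d14 d23 d24 d34)^2 + (cm4 d12 d13 d15 d23 d25 d35)^2 +
  (cm4 d12 d14 d15 d24 d25 d45)^2 + (cm4 d13 d14 d15 d34 d35 d45)^2 +
  (cm4 d23 d24 d25 d34 d35 d45)^2.

Definition Gscal x y z := Gsum x z x z y z y x z y.
Definition GP x z := Gsum x z z x x z z x z x.
Definition GQ x z := Gsum x z x z x z x x z x.
Definition GR x z := Gsum x z x z x x x z x x.

Lemma sq_pos_ne a : a <> 0 -> 0 < a^2.
Proof. intros; rewrite <- Rsqr_pow2; apply Rsqr_pos_lt; auto. Qed.

Lemma sumsq_pos a b c d e : a <> 0 \/ b <> 0 \/ c <> 0 \/ d <> 0 \/ e <> 0 ->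
  0 < a^2 + b^2 + c^2 + d^2 + e^2.
Proof.
  intros H.
  assert (0 < a^2 \/ 0 < b^2 \/ 0 < c^2 \/ 0 < d^2 \/ 0 < e^2).
  { destruct H as [H|[H|[H|[H|H]]]]; [left|right;left|right;right;left|right;right;right;left|right;right;right;right];
    apply sq_pos_ne in H; lra. }
  pose proof (pow2_ge_0 a). pose proof (pow2_ge_0 b). pose proof (pow2_ge_0 c).
  pose proof (pow2_ge_0 d). pose proof (pow2_ge_0 e). lra.
Qed.

Lemma Gscal_pos x y z : 0 < x -> 0 < y -> 0 < z -> 0 < Gscal x y z.
Proof.
  intros hx hy hz. unfold Gscal, Gsum. apply sumsq_pos.
  assert (E1 : cm4 x z z y y z = -2*z*(z^2-2*y*z+y^2-x*z-2*x*y+x^2)) by (unfold cm4; ring).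
  assert (E3 : cm4 z x z x z y = -2*z*(z^2-y*z+y^2-2*x*z-2*x*y+x^2)) by (unfold cm4; ring).
  assert (E2 : cm4 x x z z y y = -4*z^3+4*y*z^2-2*y^2*z+4*x*z^2+4*x*y*z-2*x^2*z) by (unfold cm4; ring).
  destruct (Req_dec (cm4 x z z y y z) 0) as [h1|h1]; [|tauto].
  destruct (Req_dec (cm4 z x z x z y) 0) as [h3|h3]; [|tauto].
  right; right; left. rewrite E2.
  rewrite E1 in h1. rewrite E3 in h3.
  assert (i1 : z^2-2*y*z+y^2-x*z-2*x*y+x^2 = 0).
  { apply Rmult_integral in h1. destruct h1 as [h|h]; [|exact h]. exfalso; nra. }
  assert (i3 : z^2-y*z+y^2-2*x*z-2*x*y+x^2 = 0).
  { apply Rmult_integral in h3. destruct h3 as [h|h]; [|exact h]. exfalso; nra. }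
  assert (exy : z*(x-y) = 0).
  { replace (z*(x-y)) with ((z^2-2*y*z+y^2-x*z-2*x*y+x^2) - (z^2-y*z+y^2-2*x*z-2*x*y+x^2)) by ring.
    rewrite i1, i3; ring. }
  apply Rmult_integral in exy. destruct exy as [h|h]; [lra|].
  assert (y = x) by lra. subst y.
  assert (ez : z*(z - 3*x) = 0).
  { replace (z*(z - 3*x)) with (z^2-2*x*z+x^2-x*z-2*x*x+x^2) by ring. exact i1. }
  apply Rmult_integral in ez. destruct ez as [h'|h']; [lra|].
  assert (z = 3*x) by lra. subst z.
  intro H. assert (x^3 = 0) by nra. 
  assert (0 < x^3) by (apply pow_lt; lra). lra.
Qed.

Lemma GP_pos x z : 0 < x -> 0 < z -> z^2 - 3*x*z + x^2 <> 0 -> 0 < GP x z.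
Proof.
  intros hx hz hq. unfold GP, Gsum. apply sumsq_pos. left.
  replace (cm4 x z z x z x) with (-2*(z+x)*(z^2 - 3*x*z + x^2)) by (unfold cm4; ring).
  intro H. apply Rmult_integral in H. destruct H as [H|H]; [|tauto]. lra.
Qed.

Lemma GQ_pos x z : 0 < x -> 0 < z -> 0 < GQ x z.
Proof.
  intros hx hz. unfold GQ, Gsum. apply sumsq_pos.
  replace (cm4 x z x x z x) with (-4*z^2*(z-2*x)) by (unfold cm4; ring).
  replace (cm4 x z z x x z) with (-2*z^2*(z-3*x)) by (unfold cm4; ring).
  destruct (Req_dec z (2*x)) as [e|e].
  - right; left. subst z. intro H. assert (x^3 = 0) by nra. 
    assert (0 < x^3) by (apply pow_lt; lra). lra.
  - left. intro H. apply Rmult_integral in H. destruct H as [H|H]; [|lra].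
    apply Rmult_integral in H. destruct H as [H|H]; [lra|].
    assert (0 < z^2) by (apply pow_lt; lra). lra.
Qed.

Lemma GR_pos x z : 0 < x -> 0 < z -> 0 < GR x z.
Proof.
  intros hx hz. unfold GR, Gsum. apply sumsq_pos.
  replace (cm4 x x z x x x) with (-2*x*z*(z-3*x)) by (unfold cm4; ring).
  replace (cm4 x z x x x z) with (-2*x*(z^2-4*x*z+x^2)) by (unfold cm4; ring).
  destruct (Req_dec z (3*x)) as [e|e].
  - left. subst z. intro H. assert (x^3 = 0) by nra. 
    assert (0 < x^3) by (apply pow_lt; lra). lra.
  - right; right; left. intro H. apply Rmult_integral in H. destruct H as [H|H]; [|lra].
    apply Rmult_integral in H. destruct H as [H|H]; [lra|]. lra.
Qed.

Definition perm3 (u v w s c : R) : Prop :=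
  (u=c/\v=s/\w=s) \/ (u=s/\v=c/\w=s) \/ (u=s/\v=s/\w=c).

Lemma p6_aab u v w s c : perm6 u v w s s c -> perm3 u v w s c.
Proof. unfold perm6, perm3; intuition. Qed.
Lemma p6_abb u v w s c : perm6 u v w c s s -> perm3 u v w s c.
Proof. unfold perm6, perm3; intuition. Qed.
Lemma p6_aba u v w s c : perm6 u v w s c s -> perm3 u v w s c.
Proof. unfold perm6, perm3; intuition. Qed.
Lemma p6_aaa u v w s : perm6 u v w s s s -> u = s /\ v = s /\ w = s.
Proof. unfold perm6; intuition. Qed.

Definition cands (A B C : R) : list R :=
  Gscal A B C :: Gscal A C B :: Gscal B A C :: Gscal B C A :: Gscal C A B :: Gscal C B A ::
  GP A C :: GQ A C :: GR A C :: GP B A :: GQ B A :: GR B A :: GP A B :: GQ A B :: GR A B ::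
  GP A A :: nil.

Lemma leafL L g t : g = t -> In t L -> 0 < t -> kmin L <= g.
Proof. intros -> h1 h2. apply kmin_le; auto. Qed.

Definition Qf (s c : R) : R := (c^2)^2 - 3*(s^2)*(c^2) + (s^2)^2.

Ltac inlist := simpl; repeat first [left; reflexivity | right].


Ltac substv a b c := repeat match goal with
  | H : ?x = ?y |- _ => is_var x;
      tryif constr_eq x a then fail else tryif constr_eq x b then fail else
      tryif constr_eq x c then fail else subst x
  end.

Lemma core_scal sa sb sc v12 v13 v14 v15 v23 v24 v25 v34 v35 v45 :
  0 < sa -> 0 < sb -> 0 < sc -> sa <> sb -> sb <> sc -> sa <> sc ->
  perm6 v12 v23 v13 sa sb sc -> perm6 v23 v34 v24 sa sb sc -> perm6 v34 v45 v35 sa sb sc ->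
  perm6 v14 v45 v15 sa sb sc -> perm6 v12 v25 v15 sa sb sc ->
  kmin (cands (sa^2) (sb^2) (sc^2)) <= Gsum (v12^2) (v13^2) (v14^2) (v15^2) (v23^2) (v24^2) (v25^2) (v34^2) (v35^2) (v45^2).
Proof.
  intros ha hb hc n1 n2 n3 E1 E2 E3 E4 E5.
  destruct E1 as [[? [? ?]]|[[? [? ?]]|[[? [? ?]]|[[? [? ?]]|[[? [? ?]]|[? [? ?]]]]]]]; substv sa sb sc;
  destruct E2 as [[? [? ?]]|[[? [? ?]]|[[? [? ?]]|[[? [? ?]]|[[? [? ?]]|[? [? ?]]]]]]]; substv sa sb sc; try (exfalso; congruence);
  destruct E3 as [[? [? ?]]|[[? [? ?]]|[[? [? ?]]|[[? [? ?]]|[[? [? ?]]|[? [? ?]]]]]]]; substv sa sb sc; try (exfalso; congruence);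
  destruct E4 as [[? [? ?]]|[[? [? ?]]|[[? [? ?]]|[[? [? ?]]|[[? [? ?]]|[? [? ?]]]]]]]; substv sa sb sc; try (exfalso; congruence);
  destruct E5 as [[? [? ?]]|[[? [? ?]]|[[? [? ?]]|[[? [? ?]]|[[? [? ?]]|[? [? ?]]]]]]]; substv sa sb sc; try (exfalso; congruence);
  first [ apply (leafL _ _ (Gscal (sa^2) (sb^2) (sc^2))); [unfold Gscal, Gsum, cm4; ring | inlist | apply Gscal_pos; apply pow_lt; assumption] | apply (leafL _ _ (Gscal (sa^2) (sc^2) (sb^2))); [unfold Gscal, Gsum, cm4; ring | inlist | apply Gscal_pos; apply pow_lt; assumption] | apply (leafL _ _ (Gscal (sb^2) (sa^2) (sc^2))); [unfold Gscal, Gsum, cm4; ring | inlist | apply Gscal_pos; apply pow_lt; assumption] | apply (leafL _ _ (Gscal (sb^2) (sc^2) (sa^2))); [unfold Gscal, Gsum, cm4; ring | inlist | apply Gscal_pos; apply pow_lt; assumption] | apply (leafL _ _ (Gscal (sc^2) (sa^2) (sb^2))); [unfold Gscal, Gsum, cm4; ring | inlist | apply Gscal_pos; apply pow_lt; assumption] | apply (leafL _ _ (Gscal (sc^2) (sb^2) (sa^2))); [unfold Gscal, Gsum, cm4; ring | inlist | apply Gscal_pos; apply pow_lt; assumption] ].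
Qed.

Lemma core_iso s c v12 v13 v14 v15 v23 v24 v25 v34 v35 v45 :
  0 < s -> 0 < c -> s <> c -> Qf s c <> 0 ->
  perm3 v12 v23 v13 s c -> perm3 v23 v34 v24 s c -> perm3 v34 v45 v35 s c ->
  perm3 v14 v45 v15 s c -> perm3 v12 v25 v15 s c ->
  exists t, (t = GP (s^2) (c^2) \/ t = GQ (s^2) (c^2) \/ t = GR (s^2) (c^2)) /\ 0 < t /\
    Gsum (v12^2) (v13^2) (v14^2) (v15^2) (v23^2) (v24^2) (v25^2) (v34^2) (v35^2) (v45^2) = t.
Proof.
  intros hs hc n hq E1 E2 E3 E4 E5.
  destruct E1 as [[? [? ?]]|[[? [? ?]]|[? [? ?]]]]; substv s c s;
  destruct E2 as [[? [? ?]]|[[? [? ?]]|[? [? ?]]]]; substv s c s; try (exfalso; congruence);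
  destruct E3 as [[? [? ?]]|[[? [? ?]]|[? [? ?]]]]; substv s c s; try (exfalso; congruence);
  destruct E4 as [[? [? ?]]|[[? [? ?]]|[? [? ?]]]]; substv s c s; try (exfalso; congruence);
  destruct E5 as [[? [? ?]]|[[? [? ?]]|[? [? ?]]]]; substv s c s; try (exfalso; congruence);
  first [ exists (GP (s^2) (c^2)); split; [left; reflexivity | split; [apply GP_pos; [apply pow_lt; assumption|apply pow_lt; assumption|exact hq] | unfold GP, Gsum, cm4; ring]]
        | exists (GQ (s^2) (c^2)); split; [right; left; reflexivity | split; [apply GQ_pos; apply pow_lt; assumption | unfold GQ, Gsum, cm4; ring]]
        | exists (GR (s^2) (c^2)); split; [right; right; reflexivity | split; [apply GR_pos; apply pow_lt; assumption | unfold GR, Gsum, cm4; ring]] ].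
Qed.

Lemma core_all sa sb sc v12 v13 v14 v15 v23 v24 v25 v34 v35 v45 :
  0 < sa -> 0 < sb -> 0 < sc ->
  (sa = sb -> sb <> sc -> Qf sa sc <> 0) ->
  (sb = sc -> sa <> sb -> Qf sb sa <> 0) ->
  (sa = sc -> sa <> sb -> Qf sa sb <> 0) ->
  perm6 v12 v23 v13 sa sb sc -> perm6 v23 v34 v24 sa sb sc -> perm6 v34 v45 v35 sa sb sc ->
  perm6 v14 v45 v15 sa sb sc -> perm6 v12 v25 v15 sa sb sc ->
  kmin (cands (sa^2) (sb^2) (sc^2)) <=
  Gsum (v12^2) (v13^2) (v14^2) (v15^2) (v23^2) (v24^2) (v25^2) (v34^2) (v35^2) (v45^2).
Proof.
  intros ha hb hc q1 q2 q3 E1 E2 E3 E4 E5.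
  destruct (Req_dec sa sb) as [e1|e1]; destruct (Req_dec sb sc) as [e2|e2].
  - subst sb sc.
    apply p6_aaa in E1, E2, E3, E4, E5.
    destruct E1 as [? [? ?]], E2 as [? [? ?]], E3 as [? [? ?]], E4 as [? [? ?]], E5 as [? [? ?]].
    subst.
    apply (leafL _ _ (GP (sa^2) (sa^2))); [unfold GP; reflexivity | inlist |].
    apply GP_pos; try (apply pow_lt; assumption).
    assert (0 < sa^2) by (apply pow_lt; assumption). nra.
  - subst sb.
    apply p6_aab in E1, E2, E3, E4, E5.
    destruct (core_iso sa sc _ _ _ _ _ _ _ _ _ _ ha hc e2 (q1 eq_refl e2) E1 E2 E3 E4 E5)
      as [t [ht [tp ->]]].
    apply (leafL _ _ t); auto.
    destruct ht as [ -> | [ -> | -> ] ]; inlist.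
  - subst sc.
    apply p6_abb in E1, E2, E3, E4, E5.
    destruct (core_iso sb sa _ _ _ _ _ _ _ _ _ _ hb ha (not_eq_sym e1) (q2 eq_refl e1) E1 E2 E3 E4 E5)
      as [t [ht [tp ->]]].
    apply (leafL _ _ t); auto.
    destruct ht as [ -> | [ -> | -> ] ]; inlist.
  - destruct (Req_dec sa sc) as [e3|e3].
    + subst sc.
      apply p6_aba in E1, E2, E3, E4, E5.
      destruct (core_iso sa sb _ _ _ _ _ _ _ _ _ _ ha hb e1 (q3 eq_refl e1) E1 E2 E3 E4 E5)
        as [t [ht [tp ->]]].
      apply (leafL _ _ t); auto.
      destruct ht as [ -> | [ -> | -> ] ]; inlist.
    + apply core_scal; auto.
Qed.

Lemma angle_law X Y Z : dist X Y <> 0 -> dist X Z <> 0 ->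
  angle_deg X Y Z = acos ((dist X Y ^2 + dist X Z ^2 - dist Y Z ^2) / (2 * dist X Y * dist X Z)) * 180 / PI.
Proof.
  intros h1 h2. unfold angle_deg. do 3 f_equal.
  rewrite !dist_sq. unfold sq. field. auto.
Qed.

Lemma sqrt5_facts : sqrt 5 * sqrt 5 = 5 /\ 2 < sqrt 5.
Proof.
  split. apply sqrt_sqrt; lra.
  rewrite <- (sqrt_pow2 2) by lra. apply sqrt_lt_1_alt. lra.
Qed.

Lemma cos_PI5 : cos (PI/5) = (1 + sqrt 5)/4.
Proof.
  set (t := PI/5).
  assert (ht : 3*t = PI - 2*t) by (unfold t; field).
  assert (c3 : cos (3*t) = - cos (2*t)) by (rewrite ht; apply Rtrigo_facts.cos_pi_minus).
  assert (e3 : cos (3*t) = cos (2*t) * cos t - sin (2*t) * sin t).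
  { replace (3*t) with (2*t + t) by ring. apply cos_plus. }
  rewrite cos_2a_cos in c3, e3. rewrite sin_2a in e3.
  pose proof (sin2_cos2 t) as sc. unfold Rsqr in sc.
  assert (cp : 0 < cos t).
  { apply cos_gt_0; unfold t; pose proof PI_RGT_0; lra. }
  set (c := cos t) in *. set (s := sin t) in *.
  assert (eq : (c + 1) * (4*c^2 - 2*c - 1) = 0) by nra.
  apply Rmult_integral in eq. destruct eq as [eq|eq]; [lra|].
  destruct sqrt5_facts as [s5 s5b].
  assert (eq2 : (4*c - 1 - sqrt 5) * (4*c - 1 + sqrt 5) = 0) by nra.
  apply Rmult_integral in eq2. destruct eq2 as [eq2|eq2]; lra.
Qed.

Lemma cos_2PI5 : cos (2*PI/5) = (sqrt 5 - 1)/4.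
Proof.
  replace (2*PI/5) with (2*(PI/5)) by field. rewrite cos_2a_cos, cos_PI5.
  destruct sqrt5_facts as [s5 _]. nra.
Qed.

Lemma cos_3PI5 : cos (3*PI/5) = (1 - sqrt 5)/4.
Proof.
  replace (3*PI/5) with (PI - 2*PI/5) by field. rewrite Rtrigo_facts.cos_pi_minus, cos_2PI5. lra.
Qed.

Lemma acos_deg k d : 0 <= d <= 180 -> cos (d * PI / 180) = k -> acos k * 180 / PI = d.
Proof.
  intros hd hk. rewrite <- hk. pose proof PI_RGT_0.
  rewrite acos_cos. field. lra.
  split. apply Rmult_le_pos; [|lra]. apply Rmult_le_pos; lra.
  replace PI with (180 * PI / 180) at 2 by field.
  apply Rmult_le_compat_r; [lra|]. apply Rmult_le_compat_r; lra.
Qed.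

Lemma iso_angles X Y Z s c : dist X Y = s -> dist X Z = s -> dist Y Z = c ->
  0 < s -> 0 < c -> Qf s c = 0 ->
  (angle_deg X Y Z = 108 /\ angle_deg Y Z X = 36 /\ angle_deg Z X Y = 36) \/
  (angle_deg X Y Z = 36 /\ angle_deg Y Z X = 72 /\ angle_deg Z X Y = 72).
Proof.
  intros h1 h2 h3 hs hc hq.
  assert (hYX : dist Y X = s) by (rewrite dist_sym; auto).
  assert (hZX : dist Z X = s) by (rewrite dist_sym; auto).
  assert (hZY : dist Z Y = c) by (rewrite dist_sym; auto).
  rewrite (angle_law X Y Z), (angle_law Y Z X), (angle_law Z X Y); try lra.
  rewrite h1, h2, h3, hYX, hZX, hZY.
  replace ((c ^ 2 + s ^ 2 - s ^ 2) / (2 * c * s)) with (c / (2*s)) by (field; lra).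
  replace ((s ^ 2 + c ^ 2 - s ^ 2) / (2 * s * c)) with (c / (2*s)) by (field; lra).
  replace ((s ^ 2 + s ^ 2 - c ^ 2) / (2 * s * s)) with (1 - c^2/(2*s^2)) by (field; lra).
  destruct sqrt5_facts as [s5 s5b].
  unfold Qf in hq.
  assert (e : (2*c^2 - (3 + sqrt 5)*s^2) * (2*c^2 - (3 - sqrt 5)*s^2) = 0) by nra.
  apply Rmult_integral in e. destruct e as [e|e].
  - left.
    assert (ec : c = s * (1 + sqrt 5)/2).
    { assert (e' : (c - s*(1+sqrt 5)/2) * (c + s*(1+sqrt 5)/2) = 0) by nra.
      apply Rmult_integral in e'. destruct e' as [e'|e']; [lra|].
      exfalso. assert (0 < s*(1+sqrt 5)) by nra. lra. }
    rewrite ec.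
    assert (HX : (s * (1 + sqrt 5) / 2)^2 = s^2*(3+sqrt 5)/2).
    { replace ((s * (1 + sqrt 5) / 2)^2) with (s^2*(1 + 2*sqrt 5 + sqrt 5 * sqrt 5)/4) by field.
      rewrite s5. field. }
    rewrite HX.
    split; [|split]; apply acos_deg; try lra.
    + replace (108 * PI / 180) with (3*PI/5) by field. rewrite cos_3PI5. field. lra.
    + replace (36 * PI / 180) with (PI/5) by field. rewrite cos_PI5. field. lra.
    + replace (36 * PI / 180) with (PI/5) by field. rewrite cos_PI5. field. lra.
  - right.
    assert (ec : c = s * (sqrt 5 - 1)/2).
    { assert (e' : (c - s*(sqrt 5 - 1)/2) * (c + s*(sqrt 5 - 1)/2) = 0) by nra.
      apply Rmult_integral in e'. destruct e' as [e'|e']; [lra|].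
      exfalso. assert (0 < s*(sqrt 5 - 1)) by nra. lra. }
    rewrite ec.
    assert (HX : (s * (sqrt 5 - 1) / 2)^2 = s^2*(3-sqrt 5)/2).
    { replace ((s * (sqrt 5 - 1) / 2)^2) with (s^2*(1 - 2*sqrt 5 + sqrt 5 * sqrt 5)/4) by field.
      rewrite s5. field. }
    rewrite HX.
    split; [|split]; apply acos_deg; try lra.
    + replace (36 * PI / 180) with (PI/5) by field. rewrite cos_PI5. field. lra.
    + replace (72 * PI / 180) with (2*PI/5) by field. rewrite cos_2PI5. field. lra.
    + replace (72 * PI / 180) with (2*PI/5) by field. rewrite cos_2PI5. field. lra.
Qed.

Ltac pickd := first [ split; [lra|split; lra] | left; split; [lra|split;lra] | right; pickd ].

Lemma sq0 a b : 0 = (a)^2 + (b)^2 -> a = 0 /\ b = 0.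
Proof. intros h. pose proof (pow2_ge_0 a). pose proof (pow2_ge_0 b). nra. Qed.

Lemma dist_pos_nc A B C : noncollinear A B C ->
  0 < dist A B /\ 0 < dist B C /\ 0 < dist C A.
Proof.
  intros Hnc. destruct A as [a1 a2], B as [b1 b2], C as [c1 c2].
  unfold noncollinear in Hnc; cbn [fst snd] in Hnc.
  pose proof (dist_nonneg (a1,a2) (b1,b2)).
  pose proof (dist_nonneg (b1,b2) (c1,c2)).
  pose proof (dist_nonneg (c1,c2) (a1,a2)).
  pose proof (dist_sq (a1,a2) (b1,b2)).
  pose proof (dist_sq (b1,b2) (c1,c2)).
  pose proof (dist_sq (c1,c2) (a1,a2)).
  unfold sq in *; cbn [fst snd] in *.
  split; [|split].
  - destruct (Rle_lt_or_eq_dec 0 _ H) as [h|h]; auto. exfalso. rewrite <- h in H2.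
    replace (0^2) with 0 in H2 by ring. apply sq0 in H2. destruct H2 as [e1 e2].
    assert (a1 = b1) by lra. assert (a2 = b2) by lra. subst. apply Hnc. ring.
  - destruct (Rle_lt_or_eq_dec 0 _ H0) as [h|h]; auto. exfalso. rewrite <- h in H3.
    replace (0^2) with 0 in H3 by ring. apply sq0 in H3. destruct H3 as [e1 e2].
    assert (b1 = c1) by lra. assert (b2 = c2) by lra. subst. apply Hnc. ring.
  - destruct (Rle_lt_or_eq_dec 0 _ H1) as [h|h]; auto. exfalso. rewrite <- h in H4.
    replace (0^2) with 0 in H4 by ring. apply sq0 in H4. destruct H4 as [e1 e2].
    assert (c1 = a1) by lra. assert (c2 = a2) by lra. subst. apply Hnc. ring.
Qed.

Lemma nonspecial TA TB TC : noncollinear TA TB TC ->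
  ~ is_type TA TB TC 108 36 36 -> ~ is_type TA TB TC 72 72 36 ->
  (dist TB TC = dist TC TA -> Qf (dist TB TC) (dist TA TB) <> 0) /\
  (dist TC TA = dist TA TB -> Qf (dist TC TA) (dist TB TC) <> 0) /\
  (dist TB TC = dist TA TB -> Qf (dist TB TC) (dist TC TA) <> 0).
Proof.
  intros Hnc H1 H2. destruct (dist_pos_nc _ _ _ Hnc) as [p1 [p2 p3]].
  split; [|split]; intros E Hq.
  -
    destruct (iso_angles TC TA TB (dist TB TC) (dist TA TB) (eq_sym E) (dist_sym _ _) eq_refl p2 p1 Hq) as [[a [b c]]|[a [b c]]].
    + apply H1. unfold is_type. rewrite a, b, c. pickd.
    + apply H2. unfold is_type. rewrite a, b, c. pickd.
  -
    destruct (iso_angles TA TB TC (dist TC TA) (dist TB TC) (eq_sym E) (dist_sym _ _) eq_refl p3 p2 Hq) as [[a [b c]]|[a [b c]]].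
    + apply H1. unfold is_type. rewrite a, b, c. pickd.
    + apply H2. unfold is_type. rewrite a, b, c. pickd.
  -
    assert (E' : dist TB TA = dist TB TC) by (rewrite dist_sym; symmetry; exact E).
    destruct (iso_angles TB TC TA (dist TB TC) (dist TC TA) eq_refl E' eq_refl p2 p3 Hq) as [[a [b c]]|[a [b c]]].
    + apply H1. unfold is_type. rewrite a, b, c. pickd.
    + apply H2. unfold is_type. rewrite a, b, c. pickd.
Qed.

Lemma Hedge_round TA TB TC eps e x y z :
  e = 2 * (eps * Rmin (dist TB TC) (Rmin (dist TC TA) (dist TA TB))) ->
  gapok (dist TB TC) (dist TC TA) (dist TA TB) e ->
  Hedge TA TB TC eps x y z ->
  perm6 (round (dist TB TC) (dist TC TA) (dist TA TB) e (dist x y))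
        (round (dist TB TC) (dist TC TA) (dist TA TB) e (dist y z))
        (round (dist TB TC) (dist TC TA) (dist TA TB) e (dist x z))
        (dist TB TC) (dist TC TA) (dist TA TB) /\
  Rabs (dist x y - round (dist TB TC) (dist TC TA) (dist TA TB) e (dist x y)) <= e /\
  Rabs (dist y z - round (dist TB TC) (dist TC TA) (dist TA TB) e (dist y z)) <= e /\
  Rabs (dist x z - round (dist TB TC) (dist TC TA) (dist TA TB) e (dist x z)) <= e.
Proof.
  intros he g H.
  destruct (Hedge_approx _ _ _ _ _ _ _ H) as [L1 [L2 [L3 [hp [h1 [h2 h3]]]]]].
  rewrite <- he in h1, h2, h3.
  apply (perm6_round _ _ _ _ _ _ _ L1 L2 L3); auto.
Qed.

Lemma sqbound v d S e : 0 <= v <= S - 1 -> 0 <= d -> 0 <= e <= 1 -> Rabs (d - v) <= e ->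
  Rabs (v^2) <= S^2 /\ Rabs (d^2) <= S^2 /\ Rabs (v^2 - d^2) <= 2*S*e.
Proof.
  intros hv hd he h. apply Rabs_le_inv' in h.
  split; [|split]; apply Rabs_le; split; nra.
Qed.

Lemma robust4 p1 p2 p3 p4 v12 v13 v14 v23 v24 v34 S e :
  0 <= e <= 1 -> 1 <= S ->
  0 <= v12 <= S - 1 -> 0 <= v13 <= S - 1 -> 0 <= v14 <= S - 1 ->
  0 <= v23 <= S - 1 -> 0 <= v24 <= S - 1 -> 0 <= v34 <= S - 1 ->
  Rabs (dist p1 p2 - v12) <= e -> Rabs (dist p1 p3 - v13) <= e -> Rabs (dist p1 p4 - v14) <= e ->
  Rabs (dist p2 p3 - v23) <= e -> Rabs (dist p2 p4 - v24) <= e -> Rabs (dist p3 p4 - v34) <= e ->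
  Rabs (cm4 (v12^2) (v13^2) (v14^2) (v23^2) (v24^2) (v34^2)) <= 264 * S^5 * e.
Proof.
  intros he hS b1 b2 b3 b4 b5 b6 a1 a2 a3 a4 a5 a6.
  destruct (sqbound _ _ _ _ b1 (dist_nonneg _ _) he a1) as [u1 [w1 c1]].
  destruct (sqbound _ _ _ _ b2 (dist_nonneg _ _) he a2) as [u2 [w2 c2]].
  destruct (sqbound _ _ _ _ b3 (dist_nonneg _ _) he a3) as [u3 [w3 c3]].
  destruct (sqbound _ _ _ _ b4 (dist_nonneg _ _) he a4) as [u4 [w4 c4]].
  destruct (sqbound _ _ _ _ b5 (dist_nonneg _ _) he a5) as [u5 [w5 c5]].
  destruct (sqbound _ _ _ _ b6 (dist_nonneg _ _) he a6) as [u6 [w6 c6]].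
  pose proof (cm4_planar p1 p2 p3 p4) as Z. rewrite <- !dist_sq in Z.
  rewrite <- (Rminus_0_r (cm4 _ _ _ _ _ _)), <- Z.
  replace (264 * S^5 * e) with (132 * (S^2) * (S^2) * (2*S*e)) by ring.
  apply cm4_lip; auto.
  - apply pow2_ge_0.
  - nra.
Qed.

Lemma sq_le_of_abs x B : Rabs x <= B -> x^2 <= B^2.
Proof.
  intros h. apply Rabs_le_inv' in h. nra.
Qed.

Lemma vb sa sb sc v : 0 < sa -> 0 < sb -> 0 < sc -> (v = sa \/ v = sb \/ v = sc) ->
  0 <= v <= sa + sb + sc + 1 - 1.
Proof. intros; lra. Qed.

Lemma final_ineq kap Q e : 0 < e -> e <= 1 -> 0 <= Q -> kap <= 5*Q*e^2 -> e*(5*Q+1) <= kap -> False.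
Proof.
  intros h1 h2 h3 h4 h5.
  assert (e^2 <= e) by nra.
  assert (5*Q*e^2 <= 5*Q*e) by (apply Rmult_le_compat_l; lra).
  lra.
Qed.

Theorem lemma2p10 (TA TB TC : point) :
  noncollinear TA TB TC ->
  ~ is_type TA TB TC 108 36 36 ->
  ~ is_type TA TB TC 72 72 36 ->
  ~ is_type TA TB TC 120 30 30 ->
  forbidden TA TB TC C5.
Proof.
  intros Hnc H1 H2 _.
  destruct (dist_pos_nc _ _ _ Hnc) as [pc [pa pb]].
  destruct (nonspecial _ _ _ Hnc H1 H2) as [q1 [q2 q3]].
  set (sa := dist TB TC) in *. set (sb := dist TC TA) in *. set (sc := dist TA TB) in *.
  set (kap := kmin (cands (sa^2) (sb^2) (sc^2))).
  set (S := sa + sb + sc + 1).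
  set (Q := (264 * S^5)^2).
  set (gap := kmin (Rabs (sa - sb) :: Rabs (sb - sc) :: Rabs (sa - sc) :: nil)).
  set (e := Rmin 1 (Rmin (gap/4) (kap / (5*Q+1)))).
  set (m := Rmin sa (Rmin sb sc)).
  assert (kp : 0 < kap) by apply kmin_pos.
  assert (gp : 0 < gap) by apply kmin_pos.
  assert (Qp : 0 <= Q) by (unfold Q; apply pow2_ge_0).
  assert (mp : 0 < m) by (unfold m; repeat apply Rmin_glb_lt; auto).
  assert (ep : 0 < e).
  { unfold e; repeat apply Rmin_glb_lt; try lra. apply Rdiv_lt_0_compat; lra. }
  assert (e1 : e <= 1) by apply Rmin_l.
  assert (e2 : e <= gap/4) by (eapply Rle_trans; [apply Rmin_r| apply Rmin_l]).
  assert (e3 : e <= kap/(5*Q+1)) by (eapply Rle_trans; [apply Rmin_r| apply Rmin_r]).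
  assert (g : gapok sa sb sc e).
  { unfold gapok. split; [|split]; intro n.
    - assert (gap <= Rabs (sa - sb)) by (apply kmin_le; [simpl; auto | apply Rabs_pos_lt; lra]). lra.
    - assert (gap <= Rabs (sb - sc)) by (apply kmin_le; [simpl; auto | apply Rabs_pos_lt; lra]). lra.
    - assert (gap <= Rabs (sa - sc)) by (apply kmin_le; [simpl; auto | apply Rabs_pos_lt; lra]). lra. }
  exists (e / (2*m)). split. { apply Rdiv_lt_0_compat; lra. }
  intros P _ _ [f [_ [_ Hed]]].
  assert (he : e = 2 * (e/(2*m) * Rmin (dist TB TC) (Rmin (dist TC TA) (dist TA TB)))).
  { fold sa sb sc m. field. lra. }
  pose proof (Hed 1%nat 2%nat 3%nat ltac:(simpl; auto)) as E1.
  pose proof (Hed 2%nat 3%nat 4%nat ltac:(simpl; auto)) as E2.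
  pose proof (Hed 3%nat 4%nat 5%nat ltac:(simpl; auto 6)) as E3.
  pose proof (Hed 1%nat 4%nat 5%nat ltac:(simpl; auto 6)) as E4.
  pose proof (Hed 1%nat 2%nat 5%nat ltac:(simpl; auto 7)) as E5.
  apply (Hedge_round _ _ _ _ e _ _ _ he g) in E1, E2, E3, E4, E5.
  destruct E1 as [P1 [a12 [a23 a13]]].
  destruct E2 as [P2 [_ [a34 a24]]].
  destruct E3 as [P3 [_ [a45 a35]]].
  destruct E4 as [P4 [a14 [_ a15]]].
  destruct E5 as [P5 [_ [a25 _]]].
  pose proof (core_all sa sb sc _ _ _ _ _ _ _ _ _ _ pa pb pc (fun h _ => q1 h) (fun h _ => q2 h)
    (fun h _ => q3 h) P1 P2 P3 P4 P5) as K.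
  destruct (perm6_in _ _ _ _ _ _ P1) as [i12 [i23 i13]].
  destruct (perm6_in _ _ _ _ _ _ P2) as [_ [i34 i24]].
  destruct (perm6_in _ _ _ _ _ _ P3) as [_ [i45 i35]].
  destruct (perm6_in _ _ _ _ _ _ P4) as [i14 [_ i15]].
  destruct (perm6_in _ _ _ _ _ _ P5) as [_ [i25 _]].
  apply (vb _ _ _ _ pa pb pc) in i12, i23, i13, i34, i24, i45, i35, i14, i15, i25.
  fold S in i12, i23, i13, i34, i24, i45, i35, i14, i15, i25.
  assert (e01 : 0 <= e <= 1) by lra.
  assert (S1 : 1 <= S) by (unfold S; lra).
  pose proof (robust4 _ _ _ _ _ _ _ _ _ _ _ _ e01 S1 i12 i13 i14 i23 i24 i34 a12 a13 a14 a23 a24 a34) as r1.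
  pose proof (robust4 _ _ _ _ _ _ _ _ _ _ _ _ e01 S1 i12 i13 i15 i23 i25 i35 a12 a13 a15 a23 a25 a35) as r2.
  pose proof (robust4 _ _ _ _ _ _ _ _ _ _ _ _ e01 S1 i12 i14 i15 i24 i25 i45 a12 a14 a15 a24 a25 a45) as r3.
  pose proof (robust4 _ _ _ _ _ _ _ _ _ _ _ _ e01 S1 i13 i14 i15 i34 i35 i45 a13 a14 a15 a34 a35 a45) as r4.
  pose proof (robust4 _ _ _ _ _ _ _ _ _ _ _ _ e01 S1 i23 i24 i25 i34 i35 i45 a23 a24 a25 a34 a35 a45) as r5.
  apply sq_le_of_abs in r1, r2, r3, r4, r5.
  unfold Gsum in K.
  replace ((264 * S^5 * e)^2) with (Q * e^2) in r1, r2, r3, r4, r5 by (unfold Q; ring).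
  assert (kb : kap <= 5 * Q * e^2) by (fold kap in K; lra).
  assert (e4 : e * (5*Q+1) <= kap).
  { apply (Rmult_le_compat_r (5*Q+1)) in e3; [|lra].
    replace (kap / (5*Q+1) * (5*Q+1)) with kap in e3 by (field; lra). exact e3. }
  exact (final_ineq kap Q e ep e1 Qp kb e4).
Qed.
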